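(* Let $M$ be a matroid, let $k\ge 0$ be an integer, and let $\mathcal{C}$ be a collection of circuits of $M$ such that, for some $J \subseteq E(M)$ with $|J|\leq k$, we have $C\cap C'=J$ for all distinct $C,C'\in\mathcal{C}$. Then, for every subcollection $\{C_1,\dotsc,C_{2^k}\}\subseteq\mathcal{C}$ of size $2^k$, there is a circuit of $M$ contained in $\left(\bigcup_{i=1}^{2^k}C_i\right)-J$. *)

(* Defs.v *)
From mathcomp Require Import all_boot.
Set Implicit Arguments. Unset Strict Implicit. Unset Printing Implicit Defensive.

(* A (finite) matroid whose ground set E(M) is the finite type T,
   given by its independent sets (standard independence axioms). *)
Record matroid (T : finType) := Matroid {
  indep : {set T} -> bool;
  indep0 : indep set0;
  indep_sub : forall A B : {set T}, A \subset B -> indep B -> indep A;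
  indep_aug : forall A B : {set T}, indep A -> indep B -> #|A| < #|B| ->
      exists2 x, x \in B :\: A & indep (x |: A)
}.

Definition circuit (T : finType) (M : matroid T) (C : {set T}) : Prop :=
  ~~ indep M C /\ forall D : {set T}, D \proper C -> indep M D.

(* Main.v *)
Require Import Defs.
From mathcomp Require Import all_boot.
From mathcomp Require Import zify.
Set Implicit Arguments. Unset Strict Implicit.

Section Aux.
Variables (T : finType) (M : matroid T).

Lemma dep_circuit (A : {set T}) : ~~ indep M A ->
  exists C, circuit M C /\ C \subset A.
Proof.
move=> hA.
pose P := fun B : {set T} => (B \subset A) && ~~ indep M B.
have PA : P A by rewrite /P subxx hA.
case: (arg_minnP (fun B : {set T} => #|B|) PA) => C /andP[CA hC] minC.
exists C; split=> //; split=> // D hD.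
case hi: (indep M D) => //.
have PD : P D by rewrite /P hi andbT; apply: subset_trans CA; apply: proper_sub.
have := minC D PD; have := proper_card hD; lia.
Qed.

Lemma elim_dep (C1 C2 : {set T}) e : circuit M C1 -> circuit M C2 -> C1 != C2 ->
  e \in C1 -> e \in C2 -> ~~ indep M ((C1 :|: C2) :\ e).
Proof.
move=> [hC1 mC1] [hC2 mC2] hne e1 e2; apply/negP => hU.
have [f f1 f2] : exists2 f, f \in C1 & f \notin C2.
  apply/subsetPn; apply/negP => hs.
  by move: hC1; rewrite mC2 // properEneq hne hs.
have hI0 : indep M (C1 :\ f) by apply: mC1; apply: properD1.
pose P := fun I : {set T} => [&& (C1 :\ f \subset I), (I \subset C1 :|: C2) & indep M I].
have P0 : P (C1 :\ f).
  by rewrite /P subxx hI0 andbT /=; apply: subset_trans (subsetDl _ _) (subsetUl _ _).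
case: (arg_maxnP (fun B : {set T} => #|B|) P0) => I /and3P[sI IU hI] maxI.
have fI : f \notin I.
  apply/negP => fI; move: hC1; rewrite (indep_sub _ hI) //.
  apply/subsetP => x x1; case: (x =P f) => [->//|xf].
  by apply: (subsetP sI); rewrite !inE x1 andbT; apply/eqP.
have [g g2 gI] : exists2 g, g \in C2 & g \notin I.
  apply/subsetPn; apply/negP => hs; move: hC2; by rewrite (indep_sub hs hI).
have gf : g != f by apply/eqP => eg; move: f2; rewrite -eg g2.
have sub : I \subset (C1 :|: C2) :\ f :\ g.
  apply/subsetP => x xI; rewrite !inE.
  have := subsetP IU x xI; rewrite inE => ->; rewrite !andbT.
  by apply/andP; split; apply/eqP => ex; [move: gI|move: fI]; rewrite -ex xI.
have c1 := cardsD1 f (C1 :|: C2).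
have c2 := cardsD1 g ((C1 :|: C2) :\ f).
have c3 := cardsD1 e (C1 :|: C2).
have fin : f \in C1 :|: C2 by rewrite inE f1.
have gin : g \in (C1 :|: C2) :\ f by rewrite !inE gf g2 orbT.
have ein : e \in C1 :|: C2 by rewrite inE e1.
rewrite fin in c1; rewrite gin in c2; rewrite ein in c3.
have cs := subset_leq_card sub.
have lt : #|I| < #|(C1 :|: C2) :\ e| by move: c1 c2 c3 cs; clear; lia.
case: (indep_aug hI hU lt) => x /setDP[xU xI] hx.
have Px : P (x |: I).
  rewrite /P hx andbT; apply/andP; split.
    by apply: subset_trans sI (subsetUr _ _).
  apply/subsetP => y; rewrite in_setU1 => /predU1P[->|yI].
    by move: xU; rewrite inE => /andP[].
  exact: (subsetP IU).
by have := maxI _ Px; rewrite cardsU1 xI /= add1n ltnn.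
Qed.

Lemma circuit_not_sub (C J : {set T}) : circuit M C -> indep M J -> ~~ (C \subset J).
Proof. by move=> [hC _] hJ; apply/negP => s; move: hC; rewrite (indep_sub s hJ). Qed.

Lemma pair_up (J : {set T}) e (hJ : indep M J) : forall m (F : {set {set T}}),
  (forall C, C \in F -> circuit M C) ->
  (forall C C', C \in F -> C' \in F -> C != C' -> C :&: C' \subset J) ->
  2 * m <= #|F| ->
  exists G : {set {set T}}, [/\ m <= #|G|, (forall D, D \in G -> circuit M D),
   (forall D D', D \in G -> D' \in G -> D != D' -> D :&: D' \subset J :\ e) &
   (forall D, D \in G -> D \subset (\bigcup_(C in F) C) :\ e)].
Proof.
elim=> [|m IH] F hF hP hc.
  exists set0; split=> //; by move=> D; rewrite inE.
have [C1 C1F] : exists C1, C1 \in F.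
  by apply/set0Pn; rewrite -card_gt0; move: hc; clear; lia.
have [C2 C2F] : exists C2, C2 \in F :\ C1.
  apply/set0Pn; rewrite -card_gt0; have := cardsD1 C1 F; rewrite C1F; move: hc; clear; lia.
move: C2F; rewrite !inE => /andP[C21 C2F].
pose F0 := F :\ C1 :\ C2.
have F0F : F0 \subset F by rewrite /F0; apply: subset_trans (subsetDl _ _) (subsetDl _ _).
have hc0 : 2 * m <= #|F0|.
  have := cardsD1 C1 F; have := cardsD1 C2 (F :\ C1); rewrite C1F !inE C21 C2F /F0; move: hc; clear; lia.
case: (IH F0) => //.
- by move=> C CF; apply: hF; apply: (subsetP F0F).
- by move=> C C' CF C'F; apply: hP; apply: (subsetP F0F).
move=> G0 [cG0 hG0 pG0 sG0].
have key : forall x, x \in C1 :|: C2 -> x \in \bigcup_(C in F0) C -> x \in J.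
  move=> x; rewrite inE => hx /bigcupP[C CF0 xC].
  move: CF0; rewrite /F0 !inE => /and3P[CC2 CC1 CF].
  case/orP: hx => hx.
    apply: (subsetP (hP _ _ CF C1F CC1)); by rewrite inE xC hx.
  apply: (subsetP (hP _ _ CF C2F CC2)); by rewrite inE xC hx.
have [D [hD sD]] : exists D, circuit M D /\ D \subset (C1 :|: C2) :\ e.
  case e1: (e \in C1); last first.
    exists C1; split; first exact: hF.
    apply/subsetP => x x1; rewrite !inE x1 andbT; apply/eqP => ex; by rewrite -ex x1 in e1.
  case e2: (e \in C2); last first.
    exists C2; split; first exact: hF.
    apply/subsetP => x x1; rewrite !inE x1 orbT andbT; apply/eqP => ex; by rewrite -ex x1 in e2.
  apply: dep_circuit; apply: elim_dep => //; try exact: hF.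
  by rewrite eq_sym.
have DJ : forall D', D' \in G0 -> D :&: D' \subset J :\ e.
  move=> D' D'G; apply/subsetP => x; rewrite inE => /andP[xD xD'].
  have := subsetP sD x xD; rewrite !inE => /andP[-> xU] /=.
  apply: key; first by rewrite inE.
  by move: (subsetP (sG0 _ D'G) x xD'); rewrite in_setD1 => /andP[_ ->].
have DG0 : D \notin G0.
  apply/negP => DG; have := circuit_not_sub hD hJ; apply/negP/negPn.
  apply/subsetP => x xD.
  have := subsetP (DJ D DG) x; rewrite setIid !inE => /(_ xD) /andP[].
  by [].
have sU : \bigcup_(C in F0) C \subset \bigcup_(C in F) C.
  by apply/subsetP => x /bigcupP[C CF0 xC]; apply/bigcupP; exists C => //; apply: (subsetP F0F).
exists (D |: G0); split.
- by rewrite cardsU1 DG0; move: cG0; clear; lia.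
- by move=> D'; rewrite in_setU1 => /predU1P[->|]//; apply: hG0.
- move=> A B; rewrite !in_setU1 => /predU1P[->|hA] /predU1P[->|hB] hne.
  + by rewrite eqxx in hne.
  + exact: DJ.
  + by rewrite setIC; apply: DJ.
  + exact: pG0.
- move=> D'; rewrite in_setU1 => /predU1P[->|hD'].
    apply: subset_trans sD _; apply: setSD; apply/subsetP => x; rewrite inE.
    by case/orP=> hx; apply/bigcupP; [exists C1|exists C2].
  apply: subset_trans (sG0 _ hD') _; exact: setSD.
Qed.

Lemma main_gen : forall k (J : {set T}) (F : {set {set T}}), indep M J -> #|J| <= k ->
  (forall C, C \in F -> circuit M C) ->
  (forall C C', C \in F -> C' \in F -> C != C' -> C :&: C' \subset J) ->
  2 ^ k <= #|F| ->
  exists C, circuit M C /\ C \subset (\bigcup_(D in F) D) :\: J.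
Proof.
elim=> [|k IH] J F hJ hk hF hP hc.
  have J0 : J = set0 by apply/eqP; rewrite -cards_eq0; move: hk; clear; lia.
  have [C CF] : exists C, C \in F by apply/set0Pn; rewrite -card_gt0; rewrite expn0 in hc; move: hc; clear; lia.
  exists C; split; first exact: hF.
  rewrite J0 setD0; exact: bigcup_sup.
case: (set_0Vmem J) => [J0|[e eJ]].
  have [C CF] : exists C, C \in F.
    by apply/set0Pn; rewrite -card_gt0; have := expn_gt0 2 k.+1; move: hc; clear; lia.
  exists C; split; first exact: hF.
  rewrite J0 setD0; exact: bigcup_sup.
case: (pair_up e hJ (m := 2 ^ k) hF hP); first by rewrite expnS in hc.
move=> G [cG hG pG sG].
have hJ' : indep M (J :\ e) by apply: indep_sub hJ; apply: subsetDl.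
have hk' : #|J :\ e| <= k by have := cardsD1 e J; rewrite eJ; move: hk; clear; lia.
case: (IH (J :\ e) G hJ' hk' hG pG cG) => C [hC sC].
exists C; split=> //; apply/subsetP => x xC.
have := subsetP sC x xC; rewrite !inE => /andP[xJ /bigcupP[D DG xD]].
have := subsetP (sG D DG) x xD; rewrite !inE => /andP[xe xU].
by rewrite xU andbT; move: xJ; rewrite xe.
Qed.

End Aux.

Theorem lemma3p1 (T : finType) (M : matroid T) (k : nat)
  (Cs : {set {set T}}) (J : {set T})
  (HCs : forall C, C \in Cs -> circuit M C)
  (HJk : #|J| <= k)
  (HJ : forall C C', C \in Cs -> C' \in Cs -> C != C' -> C :&: C' = J) :
  forall S : {set {set T}}, S \subset Cs -> #|S| = 2 ^ k ->
    exists C : {set T}, circuit M C /\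
      C \subset (\bigcup_(D in S) D) :\: J.
Proof.
move=> S SC hS.
have hJ : indep M J.
  case: (leqP 2 #|S|) => h2.
    have [C CS] : exists C, C \in S by apply/set0Pn; rewrite -card_gt0; move: h2; clear; lia.
    have [C' C'S] : exists C', C' \in S :\ C.
      apply/set0Pn; rewrite -card_gt0; have := cardsD1 C S; rewrite CS; move: h2; clear; lia.
    move: C'S; rewrite !inE => /andP[C'C C'S].
    have CCs := subsetP SC _ CS; have C'Cs := subsetP SC _ C'S.
    have neq : C != C' by rewrite eq_sym.
    have eJ := HJ _ _ CCs C'Cs neq.
    have [hC mC] := HCs _ CCs.
    apply: mC; rewrite properEneq -eJ subsetIl andbT.
    apply/eqP => eq; move: hC; rewrite -eq.
    have [hC' mC'] := HCs _ C'Cs.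
    rewrite mC' // properEneq subsetIr andbT.
    apply/eqP => eq2; apply: (negP C'C); apply/eqP.
    by rewrite -{1}eq2 eq.
  have k0 : k = 0.
    case: k HJk hS => // k' _ hS; move: h2; rewrite hS expnS; have := expn_gt0 2 k'; clear; lia.
  have J0 : J = set0 by apply/eqP; rewrite -cards_eq0; move: HJk; rewrite k0; clear; lia.
  by rewrite J0 indep0.
apply: (main_gen hJ HJk).
- by move=> C CS; apply: HCs; apply: (subsetP SC).
- by move=> C C' CS C'S ne; rewrite (HJ _ _ (subsetP SC _ CS) (subsetP SC _ C'S) ne).
- by rewrite hS.
Qed.
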